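(* Let $a\in\mathbb{Q}$ with $1\le a<4$. Define $b_0=\frac{a+1}{2}$ and $b_{i+1}=\mathrm{approx}\!\left(\frac{a+b_i^2}{2b_i},\,2^{-2^{i+1}-1}\right)$. Define $x:\mathbb{Q}^+\to\mathbb{Q}$ by $x(\varepsilon)=b_n$, where $n$ is the least natural number such that $2^{-2^n}\le\varepsilon$. Then $x$ is a regular function, i.e. $|x(\varepsilon_1)-x(\varepsilon_2)|\le\varepsilon_1+\varepsilon_2$ for all $\varepsilon_1,\varepsilon_2\in\mathbb{Q}^+$.
   Context: $\mathbb{Q}^+$ denotes the strictly positive rationals. For rationals in lowest terms, $\frac{n_1}{d_1}$ is simpler than $\frac{n_2}{d_2}$ if $|n_1|+|d_1|<|n_2|+|d_2|$; every closed rational interval contains a unique simplest rational. For $c\in\mathbb{Q}$, $\varepsilon\in\mathbb{Q}^+$, $\mathrm{approx}(c,\varepsilon)$ is the simplest rational number in $[c-\varepsilon,c+\varepsilon]$. *)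

(* Defs.v *)
From mathcomp Require Import all_boot all_order all_algebra.
Set Implicit Arguments. Unset Strict Implicit. Unset Printing Implicit Defensive.
Import Order.TTheory GRing.Theory Num.Theory.
Local Open Scope ring_scope.

Definition cplx (q : rat) : nat := (`|numq q|%N + `|denq q|%N)%N.

Definition inI (c e q : rat) : bool := (c - e <= q) && (q <= c + e).

(* all rationals +- i/(n-i), 0 <= i < n : every rational of complexity n
   occurs here, and every element has complexity <= n *)
Definition cands (n : nat) : seq rat :=
  [seq (i%:R / (n - i)%:R : rat) | i <- iota 0 n] ++
  [seq (- (i%:R / (n - i)%:R) : rat) | i <- iota 0 n].

(* approx c e = the simplest rational in [c - e, c + e] (for e > 0).
   Search over complexities n = 0 .. cplx c (c itself has complexity cplx c,
   so the search always succeeds for e >= 0); at the least n for which the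
   interval meets cands n, the elements found have complexity exactly n,
   i.e. they are the simplest ones (unique by the standing fact). *)
Definition approx (c e : rat) : rat :=
  let n0 := find (fun n => has (inI c e) (cands n)) (iota 0 (cplx c).+1) in
  nth 0 (filter (inI c e) (cands n0)) 0.

Fixpoint bsq (a : rat) (i : nat) : rat :=
  match i with
  | 0 => (a + 1) / 2
  | i'.+1 => let b := bsq a i' in
             approx ((a + b ^+ 2) / (2 * b)) ((2 ^+ (2 ^ i).+1)^-1)
  end.

(* least n with 2^(-2^n) <= eps; for eps > 0 such n is <= denq eps,
   so searching n in 0 .. denq eps finds the least one. *)
Definition least_n (eps : rat) : nat :=
  find (fun n => (2 ^+ (2 ^ n))^-1 <= eps) (iota 0 `|denq eps|%N.+1).

Definition xfun (a eps : rat) : rat := bsq a (least_n eps).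

(* Main.v *)
Require Import Defs.
From mathcomp Require Import all_boot all_order all_algebra zify ring lra.

Import Order.TTheory GRing.Theory Num.Theory.
Local Open Scope ring_scope.

Lemma c_in_cands (c : rat) : c \in cands (cplx c).
Proof.
rewrite /cands /cplx mem_cat.
have hq := denq_gt0 c.
set p := numq c; set q := denq c.
have eK : ((`|p| + `|q|) - `|p|)%N = `|q|%N by rewrite addKn.
have hlt : (`|p| < `|p| + `|q|)%N.
  by rewrite -{1}[`|p|%N]addn0 ltn_add2l absz_gt0 gt_eqF.
have eq : (`|q|%N%:R : rat) = q%:~R by rewrite natr_absz gtr0_norm.
have ec : c = p%:~R / q%:~R by rewrite divq_num_den.
case: (lerP 0 p) => hp.
- apply/orP; left; apply/mapP; exists `|p|%N; first by rewrite mem_iota.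
  by rewrite eK eq natr_absz ger0_norm.
- apply/orP; right; apply/mapP; exists `|p|%N; first by rewrite mem_iota.
  by rewrite eK eq natr_absz ltr0_norm // mulrNz mulNr opprK.
Qed.

Lemma approx_in (c e : rat) : 0 <= e -> c - e <= approx c e <= c + e.
Proof.
move=> he.
have hc : inI c e c by rewrite /inI gerBl he lerDl he.
rewrite /approx.
set Q := (fun n => has (inI c e) (cands n)).
have hQ : has Q (iota 0 (cplx c).+1).
  apply/hasP; exists (cplx c); first by rewrite mem_iota add0n ltnSn.
  by apply/hasP; exists c => //; apply: c_in_cands.
have hlt : (find Q (iota 0 (cplx c).+1) < (cplx c).+1)%N.
  by move: hQ; rewrite has_find size_iota.
have := nth_find 0 hQ.
rewrite nth_iota ?add0n //.
set n0 := find _ _ => hn0.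
have hf : (0 < size (filter (inI c e) (cands n0)))%N.
  by rewrite lt0n size_eq0 -has_filter.
have := mem_nth 0 hf; rewrite mem_filter => /andP[].
by rewrite /inI.
Qed.
Local Open Scope ring_scope.

From mathcomp Require Import realalg.

Lemma newton_step (R : realFieldType) (s B T : R) :
  1 <= s -> 0 < T -> T <= 1/2 -> -(T/2) <= B - s <= T ->
  0 <= (s^+2 + B^+2)/(2*B) - s <= T^+2/2.
Proof.
move=> hs hT hT2 /andP[h1 h2].
have hB : 0 < B by lra.
have -> : (s^+2 + B^+2)/(2*B) - s = (B - s)^+2/(2*B).
  by field; rewrite gt_eqF.
have h2B : 0 < 2 * B by lra.
apply/andP; split; first by rewrite divr_ge0 ?sqr_ge0 // ltW.
rewrite ler_pdivrMr //.
have : (B - s)^+2 <= T^+2 * B; last by move=> h; lra.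
case: (lerP 0 (B - s)) => he.
- have : (B - s)^+2 <= T^+2.
    by rewrite ler_sqr ?nnegrE // ltW.
  by move=> h; nra.
- have : (B - s)^+2 <= (T/2)^+2.
    rewrite -sqrrN ler_sqr ?nnegrE; lra.
  by move=> h; nra.
Qed.

Definition t (i : nat) : rat := (2 ^+ (2 ^ i))^-1.

Lemma tS i : t i.+1 = t i ^+ 2.
Proof. by rewrite /t expnS mulnC exprM exprVn. Qed.

Lemma eS i : (2 ^+ (2 ^ i.+1).+1 : rat)^-1 = t i.+1 / 2.
Proof. by rewrite /t exprS invfM mulrC. Qed.

Lemma t_pos i : 0 < t i.
Proof. by rewrite /t invr_gt0 exprn_gt0. Qed.

Lemma t_le i : t i <= 1/2.
Proof.
rewrite /t mul1r lef_pV2 ?posrE ?exprn_gt0 //.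
have h : (2 <= 2 ^ (2 ^ i))%N.
  rewrite -{1}(expn1 2) leq_pexp2l //; exact: expn_gt0.
by rewrite -natrX (ler_nat rat 2).
Qed.

Section Inv.
Variable a : rat.
Hypothesis ha : 1 <= a.
Hypothesis ha4 : a < 4.
Let s : realalg := Num.sqrt (ratr a).
Let A : realalg := ratr a.

Lemma s2 : s ^+ 2 = A.
Proof. by rewrite sqr_sqrtr // ler0q; apply: le_trans ha. Qed.

Lemma s_ge1 : 1 <= s.
Proof.
have h0 : 0 <= s by apply: sqrtr_ge0.
have hA : 1 <= A by rewrite -(rmorph1 (ratr : {rmorphism rat -> realalg})) ler_rat.
have := s2; nra.
Qed.

Lemma s_lt2 : s < 2.
Proof.
have h0 : 0 <= s by apply: sqrtr_ge0.
have hA : A < 4.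
  by rewrite -[4](rmorph_nat (ratr : {rmorphism rat -> realalg})) ltr_rat.
have := s2; nra.
Qed.

Lemma inv_bsq i :
  - (ratr (t i) / 2) <= ratr (bsq a i) - s <= ratr (t i).
Proof.
have h1 := s_ge1; have h2 := s_lt2; have hs2 := s2.
elim: i => [|i IH].
- have -> : ratr (t 0) = 1/2 :> realalg.
    by rewrite /t expn0 expr1 mul1r fmorphV rmorph_nat.
  have -> : ratr (bsq a 0) = (A + 1)/2 :> realalg.
    by rewrite /= fmorph_div rmorphD rmorph1 rmorph_nat.
  rewrite -hs2. apply/andP; split; nra.
- have hT := t_pos i; have hTl := t_le i.
  have hTR : 0 < ratr (t i) :> realalg.realalg by rewrite ltr0q.
  have hTlR : ratr (t i) <= 1/2 :> realalg.
    by move: hTl; rewrite -(ler_rat realalg) fmorph_div rmorph1 rmorph_nat.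
  have := newton_step _ _ _ _ h1 hTR hTlR IH.
  set B := ratr (bsq a i).
  move=> /andP[n1 n2].
  rewrite tS /=.
  set c := (a + bsq a i ^+ 2) / (2 * bsq a i).
  have hc : ratr c = (s^+2 + B^+2)/(2*B) :> realalg.
    by rewrite hs2 /c !expr2 fmorph_div rmorphD !rmorphM rmorph_nat.
  have he : 0 <= (2 ^+ (2 ^ i.+1).+1 : rat)^-1.
    by rewrite invr_ge0 exprn_ge0.
  have /andP[l1 l2] := approx_in c _ he.
  set d := t i ^+ 2 / 2.
  have r1 : ratr (c - d) = ratr c - ratr d :> realalg by rewrite rmorphB.
  have r2 : ratr (c + d) = ratr c + ratr d :> realalg by rewrite rmorphD.
  have r4 : ratr (t i ^+ 2) = ratr (t i) ^+ 2 :> realalg by rewrite rmorphXn.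
  have r3 : ratr d = ratr (t i ^+ 2) / 2 :> realalg.
    by rewrite /d fmorph_div rmorph_nat.
  move: l1 l2; rewrite eS tS -/d -!(ler_rat realalg) r1 r2 r3 !r4 hc.
  move=> l1 l2.
  apply/andP; split; lra.
Qed.

End Inv.

Lemma least_n_le (e : rat) : 0 < e -> (2 ^+ (2 ^ least_n e))^-1 <= e.
Proof.
move=> he.
set N := `|denq e|%N.
set P := (fun n : nat => (2 ^+ (2 ^ n))^-1 <= e).
have hq := denq_gt0 e.
have hp : 0 < numq e by rewrite numq_gt0.
have hPN : P N.
  rewrite /P.
  have h1 : (denq e)%:~R^-1 <= e.
    rewrite -{2}[e]divq_num_den -[X in X <= _]mul1r ler_wpM2r //.
      by rewrite invr_ge0 ler0z ltW.
    by rewrite ler1z; lia.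
  apply: le_trans h1.
  have hN : (N%:R : rat) = (denq e)%:~R by rewrite natr_absz gtr0_norm.
  have hNp : (0 : rat) < N%:R by rewrite hN ltr0z.
  rewrite -hN lef_pV2 ?posrE ?exprn_gt0 //.
  rewrite -natrX ler_nat.
  apply: leq_trans (ltnW (ltn_expl _ (isT : (1 < 2)%N))).
  exact: ltnW (ltn_expl _ (isT : (1 < 2)%N)).
have hP : has P (iota 0 N.+1) by apply/hasP; exists N; [rewrite mem_iota; lia | exact hPN].
have hlt : (find P (iota 0 N.+1) < N.+1)%N by move: hP; rewrite has_find size_iota.
have := nth_find 0 hP.
by rewrite nth_iota ?add0n.
Qed.

Lemma key (a : rat) (ha : 1 <= a) (ha4 : a < 4) n m :
  `|bsq a n - bsq a m| <= t n + t m.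
Proof.
rewrite -(ler_rat realalg).
have r1 : ratr `|bsq a n - bsq a m| = `|ratr (bsq a n) - ratr (bsq a m)| :> realalg.
  by rewrite ratr_norm rmorphB.
have r2 : ratr (t n + t m) = ratr (t n) + ratr (t m) :> realalg by rewrite rmorphD.
rewrite r1 r2 ler_norml.
have /andP[a1 a2] := inv_bsq _ ha ha4 n.
have /andP[b1 b2] := inv_bsq _ ha ha4 m.
have hn : 0 < ratr (t n) :> realalg by rewrite ltr0q t_pos.
have hm : 0 < ratr (t m) :> realalg by rewrite ltr0q t_pos.
apply/andP; split; lra.
Qed.

Theorem theorem38 (a : rat) (ha : 1 <= a) (ha4 : a < 4) :
  forall e1 e2 : rat, 0 < e1 -> 0 < e2 ->
    `|xfun a e1 - xfun a e2| <= e1 + e2.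
Proof.
move=> e1 e2 h1 h2; rewrite /xfun.
apply: le_trans (key _ ha ha4 _ _) _.
by apply: lerD; apply: least_n_le.
Qed.
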